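(* Let $X$ be a set of propositional variables, $\Sigma\subseteq\Pi X$ a set of classical models, and $\alpha,\beta$ formulas such that $var(\alpha)\cap var(\beta)=\emptyset$, $var(\beta)\cap R(\Sigma)=\emptyset$, and $\beta$ is not a tautology. If $\Sigma\subseteq M(\alpha\vee\beta)$, then $\Sigma\subseteq M(\alpha)$.
   Context: $\Pi X$ is the set of all assignments $X\to\{\mathrm{TRUE},\mathrm{FALSE}\}$; $M(\phi)$ is the set of models of $\phi$; $var(\phi)$ is the set of variables occurring in $\phi$. For $\Sigma\subseteq\Pi X$, a variable $p\in X$ is irrelevant for $\Sigma$ if changing the value of $p$ in any element of $\Sigma$ yields again an element of $\Sigma$ (i.e. $\Sigma=\Sigma\upharpoonright(X-\{p\})\times\{\mathrm{TRUE},\mathrm{FALSE}\}$); $I(\Sigma)$ is the set of irrelevant variables and $R(\Sigma):=X-I(\Sigma)$ the set of relevant (essential) variables. *)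

(* Defs.v *)
Inductive form (X : Type) : Type :=
| Var : X -> form X
| Top : form X
| Bot : form X
| Neg : form X -> form X
| And : form X -> form X -> form X
| Or  : form X -> form X -> form X
| Imp : form X -> form X -> form X.

Arguments Var {X} _.
Arguments Top {X}.
Arguments Bot {X}.
Arguments Neg {X} _.
Arguments And {X} _ _.
Arguments Or {X} _ _.
Arguments Imp {X} _ _.

Definition assignment (X : Type) := X -> bool.

Fixpoint sat {X : Type} (v : assignment X) (f : form X) : Prop :=
  match f with
  | Var p => v p = true
  | Top => True
  | Bot => False
  | Neg g => ~ sat v g
  | And g h => sat v g /\ sat v h
  | Or g h => sat v g \/ sat v h
  | Imp g h => sat v g -> sat v h
  end.

Definition models {X : Type} (f : form X) : assignment X -> Prop := fun v => sat v f.

Fixpoint occurs {X : Type} (p : X) (f : form X) : Prop :=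
  match f with
  | Var q => q = p
  | Top | Bot => False
  | Neg g => occurs p g
  | And g h | Or g h | Imp g h => occurs p g \/ occurs p h
  end.

Definition tautology {X : Type} (f : form X) : Prop := forall v : assignment X, sat v f.

Definition subset {X : Type} (S T : assignment X -> Prop) : Prop := forall v, S v -> T v.

Definition irrelevant {X : Type} (Sigma : assignment X -> Prop) (p : X) : Prop :=
  forall v w : assignment X, Sigma v -> (forall q, q <> p -> w q = v q) -> Sigma w.

Definition relevant {X : Type} (Sigma : assignment X -> Prop) (p : X) : Prop :=
  ~ irrelevant Sigma p.

(* Main.v *)
Require Import Defs.
From Stdlib Require Import Classical ClassicalEpsilon List FunctionalExtensionality.

Fixpoint vars {X : Type} (f : form X) : list X :=
  match f with
  | Var q => q :: nil
  | Top | Bot => nil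
  | Neg g => vars g
  | And g h | Or g h | Imp g h => vars g ++ vars h
  end.

Lemma vars_occ {X : Type} (f : form X) q : In q (vars f) -> occurs q f.
Proof.
  induction f; simpl; intros H; try tauto;
  try (apply in_app_or in H; tauto).
Qed.

Lemma sat_agree {X : Type} (f : form X) (v w : assignment X) :
  (forall q, occurs q f -> v q = w q) -> (sat v f <-> sat w f).
Proof.
  induction f; simpl; intros H.
  - rewrite (H x eq_refl); tauto.
  - tauto.
  - tauto.
  - rewrite IHf; auto; tauto.
  - rewrite IHf1, IHf2; auto; tauto.
  - rewrite IHf1, IHf2; auto; tauto.
  - rewrite IHf1, IHf2; auto; tauto.
Qed.

Lemma change_list {X : Type} (Sigma : assignment X -> Prop) (l : list X) :
  (forall p, In p l -> irrelevant Sigma p) ->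
  forall v w, Sigma v -> (forall q, ~ In q l -> w q = v q) -> Sigma w.
Proof.
  induction l as [|p l IH]; intros Hirr v w Hv Hw.
  - replace w with v; auto.
    apply FunctionalExtensionality.functional_extensionality.
    intros q; symmetry; apply Hw; simpl; tauto.
  - set (v' := fun q => if excluded_middle_informative (q = p) then w p else v q).
    assert (Hv' : Sigma v').
    { apply (Hirr p (or_introl eq_refl) v v' Hv).
      intros q Hq; unfold v'; destruct excluded_middle_informative; congruence. }
    apply (IH (fun p0 H => Hirr p0 (or_intror H)) v' w Hv').
    intros q Hq; unfold v'; destruct excluded_middle_informative as [e|n].
    + subst; reflexivity.
    + apply Hw; simpl; intros [E|E]; [congruence|tauto].
Qed.

Theorem fact4p1 (X : Type) (Sigma : assignment X -> Prop) (alpha beta : form X) :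
  (forall p, occurs p alpha -> occurs p beta -> False) ->
  (forall p, occurs p beta -> relevant Sigma p -> False) ->
  ~ tautology beta ->
  subset Sigma (models (Or alpha beta)) ->
  subset Sigma (models alpha).
Proof.
  intros Hdis Hrel Hnt Hsub v Hv.
  apply NNPP; intros Hna.
  destruct (not_all_ex_not _ _ Hnt) as [u Hu].
  set (w := fun q => if excluded_middle_informative (In q (vars beta)) then u q else v q).
  assert (Hw : Sigma w).
  { apply (change_list Sigma (vars beta)) with v; auto.
    - intros p Hp; apply NNPP; intros Hn; apply (Hrel p (vars_occ _ _ Hp)); exact Hn.
    - intros q Hq; unfold w; destruct excluded_middle_informative; tauto. }
  destruct (Hsub w Hw) as [Ha|Hb].
  - apply Hna. unfold models. apply (sat_agree alpha w v); auto.
    intros q Hq; unfold w; destruct excluded_middle_informative as [i|]; auto.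
    exfalso; exact (Hdis q Hq (vars_occ _ _ i)).
  - apply Hu. apply (sat_agree beta w u); auto.
    intros q Hq; unfold w; destruct excluded_middle_informative as [i|n]; auto.
    exfalso; apply n. clear -Hq. induction beta; simpl in *; try tauto;
      try (apply in_or_app; tauto).
Qed.
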